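(* For every integer $n\ge 4$, the ordered pair $(Q_{n+1},AC_n)$ is a duality pair; that is, for every digraph $G$, $G\to AC_n$ if and only if $Q_{n+1}\not\to G$.
   Context: A homomorphism $G\to H$ of digraphs is a vertex map sending arcs to arcs. An ordered pair of digraphs $(G,H)$ is a duality pair if for every digraph $L$: $G\not\to L$ if and only if $L\to H$. For $n\ge 3$, $Q_n$ is the oriented path $(q_0,\dots,q_{n-1})$ on $n$ distinct vertices, with exactly one arc between $q_i$ and $q_{i+1}$ for each $i$ and no other arcs, such that: the first two arcs are $q_0\to q_1$ and $q_1\to q_2$; the subpath $(q_1,\dots,q_{n-2})$ is alternating (consecutive arcs have opposite directions); and the last two arcs (between $q_{n-3},q_{n-2}$ and between $q_{n-2},q_{n-1}$) have the same direction. For $n\ge 3$, $AC_n$ is the oriented cycle with vertices $a_0,\dots,a_{n-1}$ obtained from the path $(a_0,\dots,a_n)$ in which the arc between $a_i$ and $a_{i+1}$ is $a_i\to a_{i+1}$ if $i$ is even and $a_{i+1}\to a_i$ if $i$ is odd, by identifying $a_n$ with $a_0$. *)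

(* Defs.v *)
From mathcomp Require Import all_boot.
Set Implicit Arguments. Unset Strict Implicit. Unset Printing Implicit Defensive.

(* A (finite) digraph is a finite type of vertices with an arc relation
   e : rel V  (e x y  means there is an arc x -> y). *)

Definition hom (V W : Type) (eG : rel V) (eH : rel W) : Prop :=
  exists f : V -> W, forall x y, eG x y -> eH (f x) (f y).

(* Direction of the arc between q_i and q_{i+1} in Q_n:
   true  means q_i -> q_{i+1},  false means q_{i+1} -> q_i. *)
Definition dirQ (n i : nat) : bool :=
  if i <= 1 then true else if i <= n - 3 then odd i else odd (n - 3).

Definition Q_rel (n : nat) : rel 'I_n :=
  fun x y => ((val y == (val x).+1) && dirQ n (val x))
          || ((val x == (val y).+1) && ~~ dirQ n (val y)).

Definition AC_rel (n : nat) : rel 'I_n :=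
  fun x y => ((val y == (val x).+1 %% n) && ~~ odd (val x))
          || ((val x == (val y).+1 %% n) && odd (val y)).

(* Main.v *)
Require Import Defs.
From mathcomp Require Import all_boot zify.
Set Implicit Arguments. Unset Strict Implicit.
Lemma oddE x : odd x = (x %% 2 == 1).
Proof. by rewrite modn2; case: odd. Qed.
Lemma modS_small x n : x < n -> x.+1 %% n = (if x.+1 == n then 0 else x.+1).
Proof.
move=> lt; case: eqP => [->|ne]; first by rewrite modnn.
by rewrite modn_small //; lia.
Qed.
Lemma AC_2path n (x y z : 'I_n) : 2 <= n -> AC_rel x y -> AC_rel y z -> odd n /\ val y = 0.
Proof.
case: x y z => [x hx] [y hy] [z hz] /= n2.
rewrite /AC_rel /= !modS_small // !oddE.
case: (x.+1 =P n) => ?; case: (y.+1 =P n) => ?; case: (z.+1 =P n) => ?;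
move=> /orP [/andP[/eqP ? ?]|/andP[/eqP ? ?]] /orP [/andP[/eqP ? ?]|/andP[/eqP ? ?]]; split; lia.
Qed.

Lemma AC_adj n (x y : 'I_n) : AC_rel x y -> val y = (val x).+1 %% n \/ val x = (val y).+1 %% n.
Proof. by rewrite /AC_rel => /orP [/andP [/eqP -> _]|/andP [/eqP -> _]]; [left|right]. Qed.

Lemma Qarc n i : i < n -> Q_rel (inord i : 'I_n.+1) (inord i.+1) = dirQ n.+1 i.
Proof.
move=> lt; rewrite /Q_rel /= !inordK //; last by lia.
by rewrite eqxx /= (_ : (i == i.+2) = false) ?orbF ?andbT //; lia.
Qed.

Lemma Qarc' n i : i < n -> Q_rel (inord i.+1 : 'I_n.+1) (inord i) = ~~ dirQ n.+1 i.
Proof.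
move=> lt; rewrite /Q_rel /= !inordK //; last by lia.
by rewrite eqxx /= (_ : (i == i.+2) = false) ?andbT //; lia.
Qed.

Lemma dir1 n (hn : 4 <= n) : ~ hom (@Q_rel n.+1) (@AC_rel n).
Proof.
move=> [h Hh].
pose hq i := h (inord i : 'I_n.+1).
have adj : forall i, i < n -> val (hq i.+1) = (val (hq i)).+1 %% n \/ val (hq i) = (val (hq i.+1)).+1 %% n.
  move=> i lt; case D: (dirQ n.+1 i).
    by apply: AC_adj; apply: Hh; rewrite Qarc // D.
  have := AC_adj (Hh _ _ (_ : Q_rel (inord i.+1) (inord i))).
  by rewrite Qarc' // D => /(_ isT) [|]; [right|left].
have [on h1] : odd n /\ val (hq 1) = 0.
  apply: (@AC_2path n (hq 0) (hq 1) (hq 2)); first by lia.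
    by apply: Hh; rewrite Qarc //; lia.
  by apply: Hh; rewrite Qarc //; lia.
have hn1 : val (hq (n-1)) = 0.
  have E1 : (n-2).+1 = n-1 by lia.
  have E2 : (n-1).+1 = n by lia.
  have d1 : dirQ n.+1 (n-2).
    rewrite /dirQ (_ : (n - 2 <= 1) = false); last by lia.
    rewrite (_ : (n - 2 <= n.+1 - 3) = true); last by lia.
    move: on; rewrite !oddE; lia.
  have d2 : dirQ n.+1 (n-1).
    rewrite /dirQ (_ : (n - 1 <= 1) = false); last by lia.
    rewrite (_ : (n - 1 <= n.+1 - 3) = false); last by lia.
    move: on; rewrite !oddE; lia.
  have := @AC_2path n (hq (n-2)) (hq (n-1)) (hq n).
  case; first by lia.
    by apply: Hh; rewrite -E1 Qarc //; lia.
    have q := @Qarc n (n-1) ltac:(lia); rewrite E2 in q; by apply: Hh; rewrite q.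
  by [].
have inv : forall k, k <= n - 2 -> exists a b, a + b = k /\ (val (hq k.+1) + b) %% n = a %% n.
  elim=> [|k IH] lk; first by exists 0, 0; rewrite h1.
  have [a [b [ab Hab]]] := IH (ltnW lk).
  case: (adj k.+1 (_ : k.+1 < n)); first by lia.
    move=> ->; exists a.+1, b; split; first by lia.
    by rewrite modnDml addSn -addn1 -modnDml Hab modnDml addn1.
  move=> E; exists a, b.+1; split; first by lia.
  by rewrite addnS -addSn -modnDml -E.
have [a [b [ab Hab]]] := inv (n - 2) (leqnn _).
move: Hab; rewrite (_ : (n-2).+1 = n-1); last by lia.
rewrite hn1 add0n !modn_small; try lia.
Qed.

Ltac solve_if := match goal with |- context [if ?c then _ else _] =>
  (rewrite (_ : c = true); last by (apply/idP; lia)) ||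
  (rewrite (_ : c = false); last by (apply/negbTE/negP; lia)) end.

Ltac case_if := match goal with |- context [if ?c then _ else _] =>
  lazymatch c with context [if _ then _ else _] => fail | _ => case: (boolP c) => ? end end.

Ltac crunch := repeat (solve_if || case_if); try (by []); try (exfalso; lia).

Lemma mkQhom (V : finType) (e : rel V) n (g : nat -> V) :
  (forall i, i < n -> if dirQ n.+1 i then e (g i) (g i.+1) else e (g i.+1) (g i)) ->
  hom (@Q_rel n.+1) e.
Proof.
move=> H; exists (fun x => g (val x)) => [[x hx] [y hy]]; rewrite /Q_rel /=.
case/orP => [/andP [/eqP E d]| /andP[/eqP E d]]; subst.
  by have := H x ltac:(lia); rewrite d.
by have := H y ltac:(lia); rewrite (negbTE d).
Qed.

Lemma par i : exists i', i = i'.*2 \/ i = i'.*2.+1.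
Proof. exists i./2; have := odd_double_half i; case: odd => /= H; [right|left]; lia. Qed.

Lemma Qhom_even (V : finType) (e : rel V) k a b c :
  e a b -> e b c -> hom (@Q_rel (k.*2.+4).+1) e.
Proof.
move=> ab bc.
apply: (@mkQhom V e (k.*2.+4) (fun i => if i == 0 then a else if i == k.*2.+4 then a else if odd i then b else c)).
move=> i lt; have [i' [E | E]] := par i; subst i; rewrite /dirQ !oddE; crunch.
Qed.

Definition topv (V : finType) (e : rel V) v := [exists a, exists b, e a b && e b v].
Definition Zr (V : finType) (e : rel V) w v := [exists s, e s w && e s v].
Fixpoint reach (V : finType) (e : rel V) j v :=
  if j is j'.+1 then reach e j' v || [exists w, reach e j' w && Zr e w v] else topv e v.

Definition ext (V : Type) (g : nat -> V) j (s v : V) i :=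
  if i <= j.*2.+2 then g i else if i == j.*2.+3 then s else v.
Lemma extL (V : Type) (g : nat -> V) j s v a : a <= j.*2.+2 -> ext g j s v a = g a.
Proof. by rewrite /ext => ->. Qed.

Lemma reach_walk (V : finType) (e : rel V) j v : reach e j v ->
  exists g : nat -> V, [/\ e (g 0) (g 1), e (g 1) (g 2),
    (forall i, 0 < i <= j -> e (g i.*2.+1) (g i.*2) /\ e (g i.*2.+1) (g i.*2.+2)) &
    g j.*2.+2 = v].
Proof.
elim: j v => [|j IH] v /=.
  move=> /existsP [a /existsP [b /andP [ab bv]]].
  exists (fun i => if i is 0 then a else if i is 1 then b else v); split => //.
  by move=> i; lia.
move=> H.
have [w [s [Rw [sw sv]]]] : exists w s, reach e j w /\ e s w /\ e s v.
  case/orP: H => [Rv | /existsP [w /andP [Rw /existsP [s /andP [sw sv]]]]]; last by exists w, s.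
  have [g [g01 g12 gi gv]] := IH _ Rv; exists v, (g j.*2.+1); split => //.
  rewrite -gv; case: (posnP j) => [j0|jp]; first by rewrite j0 /=.
  by case: (gi j) => //; lia.
have [g [g01 g12 gi gv]] := IH _ Rw.
exists (ext g j s v); split.
- by rewrite !extL.
- by rewrite !extL.
- move=> i hi; case: (ltnP i j.+1) => hij.
    rewrite (@extL _ g j s v i.*2.+1) ?(@extL _ g j s v i.*2) ?(@extL _ g j s v i.*2.+2); [apply: gi| | |]; lia.
  have -> : i = j.+1 by lia.
  rewrite doubleS (@extL _ g j s v j.*2.+2) // gv /ext.
  by repeat solve_if.
- by rewrite doubleS /ext; repeat solve_if.
Qed.

Lemma Qhom_odd (V : finType) (e : rel V) k m y : reach e k m -> e m y -> hom (@Q_rel (k.*2.+4)) e.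
Proof.
move=> Rm my; have [g [g01 g12 gi gm]] := reach_walk Rm.
apply: (@mkQhom V e (k.*2.+3) (fun i => if i == k.*2.+3 then y else g i)).
move=> i lt; have [i' [E | E]] := par i; subst i; rewrite /dirQ !oddE; crunch.
all: first [ (have E0 : i' = 0 by lia); rewrite E0; done
           | by case: (gi i' ltac:(lia))
           | (have -> : i'.*2 = k.*2.+2 by lia); by rewrite gm ].
Qed.

Definition fd (P : pred nat) k := find P (iota 0 k.+1).
Lemma fd_le (P : pred nat) k : fd P k <= k.+1.
Proof. by have := find_size P (iota 0 k.+1); rewrite size_iota. Qed.
Lemma fd_P (P : pred nat) k : fd P k <= k -> P (fd P k).
Proof.
move=> h; have hs : has P (iota 0 k.+1) by rewrite has_find size_iota.
by have := nth_find 0 hs; rewrite nth_iota //; lia.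
Qed.
Lemma fd_min (P : pred nat) k j : j <= k -> P j -> fd P k <= j.
Proof.
move=> jk Pj; rewrite leqNgt; apply/negP => lt.
by have := before_find 0 lt; rewrite nth_iota ?add0n ?Pj //; lia.
Qed.

Lemma AC_inord k a b : a <= k.*2.+2 -> b <= k.*2.+2 ->
  ((b = a.+1 \/ (b = 0 /\ a = k.*2.+2)) /\ a %% 2 = 0) \/
  ((a = b.+1 \/ (a = 0 /\ b = k.*2.+2)) /\ b %% 2 = 1) ->
  AC_rel (inord a : 'I_(k.*2.+3)) (inord b).
Proof.
move=> ha hb H; rewrite /AC_rel /= !inordK; try lia.
rewrite !modS_small ?oddE; try lia.
crunch; lia.
Qed.

Lemma dir2odd (V : finType) (e : rel V) k :
  ~ hom (@Q_rel (k.*2.+4)) e -> hom e (@AC_rel (k.*2.+3)).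
Proof.
move=> noQ.
have noM : forall x m y, e x m -> e m y -> ~~ reach e k m.
  by move=> x m y xm my; apply/negP => R; apply: noQ; apply: (Qhom_odd R my).
have mono : forall j j' v, j <= j' -> reach e j v -> reach e j' v.
  move=> j j' v; elim: j' => [|j' IH]; first by rewrite leqn0 => /eqP ->.
  by rewrite leq_eqVlt => /orP [/eqP -> //| lt] R; rewrite /= IH.
have step : forall j w v s, reach e j w -> e s w -> e s v -> reach e j.+1 v.
  move=> j w v s Rw sw sv /=; apply/orP; right; apply/existsP; exists w.
  by rewrite Rw /=; apply/existsP; exists s; rewrite sw sv.
have top0 : forall a b v, e a b -> e b v -> reach e 0 v.
  by move=> a b v ab bv /=; apply/existsP; exists a; apply/existsP; exists b; rewrite ab bv.
pose dd v := fd (fun j => reach e j v) k.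
pose ds u := fd (fun j => [exists w, e u w && reach e j w]) k.
exists (fun v => inord (if [exists x, e x v] then (if dd v <= k then (dd v).*2.+1 else 0)
                    else (if ds v <= k then (ds v).*2.+2 else k.*2.+2)) : 'I_(k.*2.+3)).
move=> u v uv.
have inv : [exists x, e x v] by apply/existsP; exists u.
rewrite inv.
have ddle := fd_le (fun j => reach e j v) k.
case: (boolP [exists x, e x u]) => [/existsP [x xu] | nu].
  have dv0 : dd v = 0.
    by apply/eqP; rewrite -leqn0; apply: fd_min => //; apply: top0 xu uv.
  have du : (dd u <= k) = false.
    apply/negP => h; have := @fd_P (fun j => reach e j u) k h => R.
    by have := noM _ _ _ xu uv; rewrite (mono _ k _ h R).
  rewrite dv0 du /=; apply: AC_inord; lia.
case: (leqP (ds u) k) => hs.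
  have := @fd_P _ k hs => /existsP [w /andP [uw Rw]].
  have Rv1 : reach e (ds u).+1 v := step _ _ _ _ Rw uw uv.
  have lo : dd v <= k -> ds u <= dd v.
    move=> h; apply: fd_min => //; apply/existsP; exists v; rewrite uv /=.
    exact: (@fd_P (fun j => reach e j v) k h).
  have hi : (ds u).+1 <= k -> dd v <= (ds u).+1 := fun h => fd_min h Rv1.
  crunch; apply: AC_inord; lia.
have ddk : (dd v <= k) = false.
  apply/negP => h; have : ds u <= dd v.
    apply: fd_min => //; apply/existsP; exists v; rewrite uv /=.
    exact: (@fd_P (fun j => reach e j v) k h).
  lia.
rewrite ddk; crunch; apply: AC_inord; lia.
Qed.

Lemma dir2even (V : finType) (e : rel V) k :
  ~ hom (@Q_rel (k.*2.+4).+1) e -> hom e (@AC_rel (k.*2.+4)).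
Proof.
move=> noQ.
exists (fun v => inord (if [exists w, e v w] then 0 else 1) : 'I_(k.*2.+3).+1).
move=> u v uv.
have -> : [exists w, e u w] by apply/existsP; exists v.
have -> : [exists w, e v w] = false.
  apply/negbTE/negP => /existsP [w vw]; apply: noQ; exact: (Qhom_even k uv vw).
by rewrite /AC_rel /= (@inordK (k.*2.+3) 0) // (@inordK (k.*2.+3) 1) // modn_small.
Qed.

Theorem mainTheorem8 (n : nat) (hn : 4 <= n) (V : finType) (e : rel V) :
  hom e (@AC_rel n) <-> ~ hom (@Q_rel n.+1) e.
Proof.
split.
  move=> [f Hf] [g Hg]; apply: (dir1 hn); exists (fun x => f (g x)) => x y /Hg /Hf //.
move=> noQ; have [k [E|E]] := par n.
  have E' : n = (k - 2).*2.+4 by lia.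
  by move: noQ; rewrite E'; apply: dir2even.
have E' : n = (k - 1).*2.+3 by lia.
by move: noQ; rewrite E'; apply: dir2odd.
Qed.
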